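(* Let $\Gamma$ be a second countable locally compact abelian group, $n\ge2$, $\omega\in\Gamma^n$, and $X$ a non-empty $\omega$-invariant subset of $\Gamma$. The following are equivalent: (i) $X$ is prime; (ii) for any $\gamma_0,\gamma_1\in X$ and any neighborhoods $U_0,U_1$ of $\gamma_0,\gamma_1$, there exist $\gamma\in X$ and words $\mu,\nu$ with $\gamma+\omega_\mu\in U_0$ and $\gamma+\omega_\nu\in U_1$; (iii) for any $\gamma_0,\gamma_1\in X$ there exist sequences of words $\mu_1,\mu_2,\ldots$ and $\nu_1,\nu_2,\ldots$ with $\gamma_0-\omega_{\mu_k}\in X$, $\gamma_1-\omega_{\nu_k}\in X$ for all $k$ and $\lim_{k\to\infty}\big((\gamma_0-\omega_{\mu_k})-(\gamma_1-\omega_{\nu_k})\big)=0$; (iv) $X=\gamma+\Omega_{\mathbb{I}}$ for some $\gamma\in\Gamma$ and some non-empty $\mathbb{I}\subset\{1,\ldots,n\}$.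
   Context: $\Gamma$ is written additively. Words are finite sequences $\mu=(i_1,\ldots,i_k)$ in $\{1,\ldots,n\}$ (including the empty word), and $\omega_\mu=\sum_j\omega_{i_j}$ ($\omega_\emptyset=0$). A closed $X\subset\Gamma$ is $\omega$-invariant if $X+\omega_i\subset X$ for all $i$ and every $\gamma\in X$ has some $i$ with $\gamma-\omega_i\in X$; it is prime if for all $\omega$-invariant $X_1,X_2$ with $X\subset X_1\cup X_2$ one has $X\subset X_1$ or $X\subset X_2$. For non-empty $\mathbb{I}$, $\Omega_{\mathbb{I}}$ is the closed subsemigroup generated by $\omega_1,\ldots,\omega_n$ and $-\omega_i$ ($i\in\mathbb{I}$). *)

(* Defs.v *)
From HB Require Import structures.
From mathcomp Require Import all_boot all_order all_algebra.
From mathcomp Require Import all_classical all_reals all_analysis.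
Set Implicit Arguments.
Unset Strict Implicit.
Unset Printing Implicit Defensive.
Import Order.TTheory GRing.Theory Num.Theory.
Local Open Scope classical_set_scope.
Local Open Scope ring_scope.

(* Gamma is a topologicalZmodType (topological abelian group, written additively).
   Indices 1..n of the paper are represented by 'I_n (0..n-1). *)

Definition word_sum (G : zmodType) (n : nat) (w : 'I_n -> G) (mu : seq 'I_n) : G :=
  \sum_(i <- mu) w i.

Definition omega_invariant (G : topologicalZmodType) (n : nat) (w : 'I_n -> G)
    (X : set G) : Prop :=
  [/\ closed X,
      (forall i x, X x -> X (x + w i)) &
      (forall x, X x -> exists i, X (x - w i))].

Definition prime_set (G : topologicalZmodType) (n : nat) (w : 'I_n -> G)
    (X : set G) : Prop :=
  forall X1 X2 : set G, omega_invariant w X1 -> omega_invariant w X2 ->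
    X `<=` X1 `|` X2 -> X `<=` X1 \/ X `<=` X2.

Definition Omega (G : topologicalZmodType) (n : nat) (w : 'I_n -> G)
    (I : {set 'I_n}) : set G :=
  \bigcap_(S in [set S : set G | [/\ closed S,
        (forall x y, S x -> S y -> S (x + y)),
        (forall i, S (w i)) &
        (forall i, i \in I -> S (- w i))]]) S.

(* Main.v *)
Require Import Defs.
From HB Require Import structures.
From mathcomp Require Import all_boot all_order all_algebra.
From mathcomp Require Import all_classical all_reals all_analysis.
Import Order.TTheory GRing.Theory Num.Theory.
Local Open Scope classical_set_scope.
Local Open Scope ring_scope.
Set Implicit Arguments.
Unset Strict Implicit.
Unset Printing Implicit Defensive.

Lemma closed_forall (T : topologicalType) (K : Type) (A : K -> set T) :
  (forall k, closed (A k)) -> closed [set x | forall k, A k x].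
Proof. by move=> cA x clx k; apply: cA; apply: closureS clx => y; apply. Qed.

Section Basics.
Variables (G : topologicalZmodType) (n : nat) (w : 'I_n -> G).
Local Notation ws := (word_sum w).

Lemma ws_nil : ws [::] = 0. Proof. by rewrite /word_sum big_nil. Qed.
Lemma ws_cons i mu : ws (i :: mu) = w i + ws mu. Proof. by rewrite /word_sum big_cons. Qed.
Lemma ws_cat mu nu : ws (mu ++ nu) = ws mu + ws nu. Proof. by rewrite /word_sum big_cat. Qed.
Lemma ws_rem j mu : j \in mu -> ws mu = w j + ws (rem j mu).
Proof. by move=> h; rewrite /word_sum (big_rem j h). Qed.

Lemma addr_cont (a : G) : continuous (fun y : G => y + a).
Proof.
move=> y; apply: (@continuous_comp _ _ _ (fun y => (y, a)) (fun x : G * G => x.1 + x.2)).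
  by apply: cvg_pair; [exact: cvg_id | exact: cvg_cst].
exact: add_continuous.
Qed.

Lemma closed_transl (Y : set G) a : closed Y -> closed [set x | Y (x + a)].
Proof. by move=> cY; apply: (@preimage_closed _ _ (fun y => y + a)) => // x _; exact: addr_cont. Qed.

Definition fwd (Y : set G) := forall i x, Y x -> Y (x + w i).
Lemma fwd_word Y : fwd Y -> forall mu x, Y x -> Y (x + ws mu).
Proof.
move=> fY; elim=> [|i mu IH] x Yx; first by rewrite ws_nil addr0.
by rewrite ws_cons addrA; apply: IH; apply: fY.
Qed.

End Basics.

Lemma closed_exists_fin (T : topologicalType) (I : finType) (A : I -> set T) :
  (forall i, closed (A i)) -> closed [set x | exists i, A i x].
Proof.
move=> cA x clx; apply: contrapT => /forallNP nx.
have : \forall y \near x, forall i, ~ A i y.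
  apply: filter_forall => i.
  have := closed_openC (cA i); rewrite openE => /(_ x (nx i)); exact.
by move=> /clx [y [[i Ai] /(_ i)]].
Qed.

Section Zc.
Variables (G : topologicalZmodType) (n : nat) (w : 'I_n -> G).
Local Notation ws := (word_sum w).

Definition Bk (Y : set G) k := [set x | exists mu, size mu = k /\ Y (x - ws mu)].
Definition Zc Y := [set x | forall k, Bk Y k x].

Lemma Bk_closed Y k : closed Y -> closed (Bk Y k).
Proof.
move=> cY.
have -> : Bk Y k = [set x | exists t : k.-tuple 'I_n, [set y | Y (y + - ws t)] x].
  apply/seteqP; split=> x /=.
    by move=> [mu [smu Ymu]]; exists (Tuple (introT eqP smu)).
  by move=> [t Yt]; exists t; rewrite size_tuple.
by apply: closed_exists_fin => t; apply: closed_transl.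
Qed.

Lemma Bk_mono Y k l x : fwd w Y -> (k <= l)%N -> Bk Y l x -> Bk Y k x.
Proof.
move=> fY kl [mu [smu Ymu]]; exists (drop (l - k) mu); split.
  by rewrite size_drop smu subKn.
have := fwd_word fY (take (l - k) mu) Ymu.
suff -> : x - ws mu + ws (take (l - k) mu) = x - ws (drop (l - k) mu) by [].
by rewrite -{1}(cat_take_drop (l - k) mu) ws_cat opprD addrA addrAC subrK.
Qed.

Lemma Zc_sub Y : Zc Y `<=` Y.
Proof. by move=> x /(_ 0%N) [mu [/size0nil -> ]]; rewrite ws_nil subr0. Qed.

Lemma Zc_inv Y : closed Y -> fwd w Y -> omega_invariant w (Zc Y).
Proof.
move=> cY fY; split.
- by apply: closed_forall => k; apply: Bk_closed.
- move=> i x Zx k; have [mu [smu Ymu]] := Zx k; exists mu; split => //.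
  by rewrite addrAC; apply: fY.
- move=> x Zx; apply: contrapT => /forallNP nZ.
  have : forall i, exists k, ~ Bk Y k (x - w i).
    by move=> i; have := nZ i => /existsNP.
  move=> /choice [f hf].
  have [mu [smu Ymu]] := Zx (\max_i f i).+1.
  case: mu smu Ymu => // i rho [srho] Yrho.
  apply: (hf i); apply: (@Bk_mono _ _ (\max_i f i)) => //; first exact: leq_bigmax.
  by exists rho; split => //; rewrite ws_cons opprD addrA in Yrho.
Qed.

End Zc.

Section PrimeII.
Variables (G : topologicalZmodType) (n : nat) (w : 'I_n -> G) (X : set G).
Hypothesis HXinv : omega_invariant w X.
Local Notation ws := (word_sum w).

Lemma inv_fwd (Y : set G) : omega_invariant w Y -> fwd w Y.
Proof. by case. Qed.

Lemma inv_closed (Y : set G) : omega_invariant w Y -> closed Y.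
Proof. by case. Qed.

Lemma chain_back x : X x -> forall L, exists mu, size mu = L /\ X (x - ws mu).
Proof.
move=> Xx; elim=> [|L [mu [smu Xmu]]]; first by exists [::]; rewrite ws_nil subr0.
have [_ _ hb] := HXinv; have [i Xi] := hb _ Xmu.
by exists (i :: mu); split; [rewrite /= smu | rewrite ws_cons opprD addrA addrAC].
Qed.

Definition propII := forall g0 g1 (U0 U1 : set G), X g0 -> X g1 ->
           nbhs g0 U0 -> nbhs g1 U1 ->
           exists g mu nu, [/\ X g, U0 (g + ws mu) & U1 (g + ws nu)].

Definition avoid (U : set G) := [set x | X x /\ forall mu, ~ U° (x + ws mu)].

Lemma avoid_closed U : closed (avoid U).
Proof.
apply: closedI; first exact: inv_closed HXinv.
apply: closed_forall => mu; apply: (@closed_transl _ (~` U°)).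
by rewrite closedC; apply: open_interior.
Qed.

Lemma avoid_fwd U : fwd w (avoid U).
Proof.
move=> i x [Xx hx]; split; first exact: (inv_fwd HXinv).
by move=> mu; rewrite -addrA -ws_cons; apply: hx.
Qed.

Lemma prime_II : prime_set w X -> propII.
Proof.
move=> Hp g0 g1 U0 U1 Xg0 Xg1 n0 n1; apply: contrapT => Hno.
have i0 := Zc_inv (@avoid_closed U0) (@avoid_fwd U0).
have i1 := Zc_inv (@avoid_closed U1) (@avoid_fwd U1).
have cov : X `<=` Zc w (avoid U0) `|` Zc w (avoid U1).
  move=> x Xx; apply: contrapT => /not_orP [/existsNP [k0 nk0] /existsNP [k1 nk1]].
  have [mu [smu Xe]] := chain_back Xx (k0 + k1).
  have [Y0|nY0] := EM (avoid U0 (x - ws mu)).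
    apply: nk0; apply: (@Bk_mono _ _ _ _ _ (k0 + k1) _ (@avoid_fwd U0)).
      by rewrite ?leq_addr ?leq_addl.
    by exists mu.
  have [Y1|nY1] := EM (avoid U1 (x - ws mu)).
    apply: nk1; apply: (@Bk_mono _ _ _ _ _ (k0 + k1) _ (@avoid_fwd U1)).
      by rewrite ?leq_addr ?leq_addl.
    by exists mu.
  have /existsNP [mu0 /contrapT h0] : ~ forall mu0, ~ U0° (x - ws mu + ws mu0).
    by move=> h; apply: nY0.
  have /existsNP [mu1 /contrapT h1] : ~ forall mu1, ~ U1° (x - ws mu + ws mu1).
    by move=> h; apply: nY1.
  by apply: Hno; exists (x - ws mu), mu0, mu1; split => //; apply: interior_subset.
case: (Hp _ _ i0 i1 cov) => h.
  by have [_ /(_ [::])] := Zc_sub (h _ Xg0); rewrite ws_nil addr0; apply.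
by have [_ /(_ [::])] := Zc_sub (h _ Xg1); rewrite ws_nil addr0; apply.
Qed.

Lemma II_prime : propII -> prime_set w X.
Proof.
move=> H2 X1 X2 i1 i2 cov.
apply: contrapT => /not_orP [/existsNP [x0 /not_implyP [Xx0 n0]] /existsNP [x1 /not_implyP [Xx1 n1]]].
have nb0 : nbhs x0 (~` X1) by apply: open_nbhs_nbhs; split => //; rewrite openC; exact: inv_closed i1.
have nb1 : nbhs x1 (~` X2) by apply: open_nbhs_nbhs; split => //; rewrite openC; exact: inv_closed i2.
have [g [mu [nu [Xg h0 h1]]]] := H2 _ _ _ _ Xx0 Xx1 nb0 nb1.
by case: (cov _ Xg) => h; [apply: h0 | apply: h1]; apply: fwd_word => //; apply: inv_fwd.
Qed.

End PrimeII.

Lemma sub_nbhs (G : topologicalZmodType) (x y : G) (B : set G) : nbhs (x - y) B ->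
  exists U V, [/\ nbhs x U, nbhs y V & forall a b, U a -> V b -> B (a - b)].
Proof.
move=> nB; have := @sub_continuous G (x, y) B nB.
move=> [[U V] /= [nU nV] sub]; exists U, V; split => // a b Ua Vb.
by have := sub (a, b) (conj Ua Vb).
Qed.

Lemma transl_nbhs (G : topologicalZmodType) (x a : G) (B : set G) : nbhs (x + a) B ->
  nbhs x [set y | B (y + a)].
Proof. by move=> nB; have := @addr_cont G a x B nB. Qed.

Lemma closure_add (G : topologicalZmodType) (A : set G) :
  (forall x y, A x -> A y -> A (x + y)) ->
  forall x y, closure A x -> closure A y -> closure A (x + y).
Proof.
move=> hA.
have step : forall x a, closure A x -> A a -> closure A (x + a).
  move=> x a cx Aa B nB; have [b [Ab Bb]] := cx _ (transl_nbhs nB).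
  by exists (b + a); split => //; apply: hA.
move=> x y cx cy B nB.
have nB' : nbhs (y + x) B° by apply: nbhs_interior; rewrite addrC.
have [a [Aa Ba]] := cy _ (transl_nbhs nB').
have Ba' : nbhs (x + a) B by move: Ba => /=; rewrite addrC.
exact: (step _ _ cx Aa) _ Ba'.
Qed.

Section OmegaProps.
Variables (G : topologicalZmodType) (n : nat) (w : 'I_n -> G) (I : {set 'I_n}).
Local Notation ws := (word_sum w).
Local Notation Om := (Omega w I).

Definition csg (S : set G) := [/\ closed S,
        (forall x y, S x -> S y -> S (x + y)),
        (forall i, S (w i)) &
        (forall i, i \in I -> S (- w i))].

Lemma Om_min S : csg S -> Om `<=` S.
Proof. by move=> cS x; apply. Qed.

Lemma Om_closed : closed Om.
Proof.
move=> x clx S PS; have [cS _ _ _] := PS.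
by apply: cS; apply: closureS clx => y; apply.
Qed.

Lemma Om_add x y : Om x -> Om y -> Om (x + y).
Proof. move=> Ox Oy S PS; have [_ hS _ _] := PS; exact: hS (Ox _ PS) (Oy _ PS). Qed.

Lemma Om_w j : Om (w j).
Proof. by move=> S [_ _ hS _]. Qed.

Lemma Om_negw i : i \in I -> Om (- w i).
Proof. by move=> iI S [_ _ _ hS]; apply: hS. Qed.

Lemma Om0 : I != finset.set0 -> Om 0.
Proof.
move=> /set0Pn [i iI]; rewrite -(subrr (w i)).
by apply: Om_add; [apply: Om_w | apply: Om_negw].
Qed.

Lemma Om_word mu : I != finset.set0 -> Om (ws mu).
Proof.
move=> hI; elim: mu => [|i mu IH]; first by rewrite ws_nil; apply: Om0.
by rewrite ws_cons; apply: Om_add => //; apply: Om_w.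
Qed.

Lemma Om_negword nu : I != finset.set0 -> all (mem I) nu -> Om (- ws nu).
Proof.
move=> hI; elim: nu => [|i nu IH] /=; first by move=> _; rewrite ws_nil oppr0; exact: Om0 hI.
move=> /andP [iI anu]; rewrite ws_cons opprD.
by apply: Om_add; [exact: (Om_negw iI) | exact: IH anu].
Qed.

Definition Sset := [set x | exists mu nu, all (mem I) nu /\ x = ws mu - ws nu].

Lemma Sset_Om : I != finset.set0 -> Sset `<=` Om.
Proof.
move=> hI x [mu [nu [anu ->]]].
by apply: Om_add; [apply: Om_word | apply: Om_negword].
Qed.

Lemma Om_clS : Om `<=` closure Sset.
Proof.
apply: Om_min; split.
- exact: closed_closure.
- apply: closure_add => _ _ [mu [nu [anu ->]]] [mu' [nu' [anu' ->]]].
  exists (mu ++ mu'), (nu ++ nu'); split; first by rewrite all_cat anu anu'.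
  by rewrite !ws_cat opprD addrACA.
- move=> j; apply: subset_closure; exists [:: j], [::]; split => //.
  by rewrite ws_cons ws_nil !addr0 subr0.
- move=> i iI; apply: subset_closure; exists [::], [:: i]; split; first by rewrite /= iI.
  by rewrite ws_cons ws_nil !addr0 sub0r.
Qed.

End OmegaProps.

Section III.
Variables (G : topologicalZmodType) (n : nat) (w : 'I_n -> G) (X : set G).
Hypothesis HXinv : omega_invariant w X.
Local Notation ws := (word_sum w).

Definition propIII := forall g0 g1, X g0 -> X g1 ->
           exists (mu nu : nat -> seq 'I_n),
             [/\ (forall k, X (g0 - ws (mu k))),
                 (forall k, X (g1 - ws (nu k))) &
                 (fun k => (g0 - ws (mu k)) - (g1 - ws (nu k)))
                   @ \oo --> (0 : G)].

Lemma III_II : propIII -> propII w X.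
Proof.
move=> H3 g0 g1 U0 U1 Xg0 Xg1 n0 n1.
have [mu [nu [X0 X1 hd]]] := H3 _ _ Xg0 Xg1.
have nb : nbhs (0 : G) [set y | U1 (y + g1)] by apply: transl_nbhs; rewrite add0r.
have [N _ hN] := hd _ nb.
exists (g0 - ws (mu N)), (mu N), (nu N); split => //.
  by rewrite subrK; apply: nbhs_singleton.
have := hN N (leqnn N); rewrite /=.
suff -> : g0 - ws (mu N) + ws (nu N) = g0 - ws (mu N) - (g1 - ws (nu N)) + g1 by [].
by rewrite opprB addrA subrK.
Qed.

End III.

Section Gen.
Variables (G : topologicalZmodType) (n : nat) (w : 'I_n -> G).
Local Notation ws := (word_sum w).

Lemma ws_cons_sub x j rho : x - ws (j :: rho) = x - ws rho - w j.
Proof. by rewrite ws_cons opprD addrA addrAC. Qed.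

Lemma inv_union (A B : set G) : omega_invariant w A -> omega_invariant w B ->
  omega_invariant w (A `|` B).
Proof.
move=> [cA fA bA] [cB fB bB]; split; first exact: closedU.
  by move=> i x [Ax|Bx]; [left; apply: fA | right; apply: fB].
move=> x [Ax|Bx]; [have [i h] := bA _ Ax | have [i h] := bB _ Bx]; exists i;
  by [left | right].
Qed.

Lemma inv_set0 : omega_invariant w set0.
Proof. by split => //; exact: closed0. Qed.

Definition Ucov (T : set G) (F : 'I_n -> set G) (s : seq 'I_n) :=
  T `|` [set x | exists2 j, j \in s & F j x].

Lemma inv_Ucov T F s : omega_invariant w T ->
  (forall j, j \in s -> omega_invariant w (F j)) -> omega_invariant w (Ucov T F s).
Proof.
move=> iT; elim: s => [|j s IH] iF.
  have -> : Ucov T F [::] = T; last by [].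
  by apply/seteqP; split => x; [case => // [[j]] | left].
have -> : Ucov T F (j :: s) = F j `|` Ucov T F s.
  apply/seteqP; split => x.
    case=> [Tx|[k]]; first by right; left.
    rewrite inE => /orP [/eqP -> Fx|ks Fx]; first by left.
    by right; right; exists k.
  case=> [Fx|[Tx|[k ks Fx]]]; first by right; exists j => //; rewrite inE eqxx.
    by left.
  by right; exists k => //; rewrite inE ks orbT.
apply: inv_union; first by apply: iF; rewrite inE eqxx.
by apply: IH => k ks; apply: iF; rewrite inE ks orbT.
Qed.

Lemma prime_cover (X T : set G) (F : 'I_n -> set G) (s : seq 'I_n) :
  prime_set w X -> omega_invariant w T ->
  (forall j, j \in s -> omega_invariant w (F j)) ->
  X `<=` Ucov T F s -> X `<=` T \/ exists2 j, j \in s & X `<=` F j.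
Proof.
move=> Hp iT; elim: s => [|j s IH] iF cov.
  by left => x /cov [//|[j]].
have iF' : forall k, k \in s -> omega_invariant w (F k).
  by move=> k ks; apply: iF; rewrite inE ks orbT.
have cov' : X `<=` F j `|` Ucov T F s.
  move=> x /cov [Tx|[k]]; first by right; left.
  rewrite inE => /orP [/eqP -> Fx|ks Fx]; first by left.
  by right; right; exists k.
case: (Hp _ _ (iF j _) (inv_Ucov iT iF') cov'); first by rewrite inE eqxx.
  by move=> h; right; exists j => //; rewrite inE eqxx.
move=> /(IH iF') [h|[k ks h]]; first by left.
by right; exists k => //; rewrite inE ks orbT.
Qed.

End Gen.

Section PrimeIV.
Variables (G : topologicalZmodType) (n : nat) (w : 'I_n -> G) (X : set G).
Hypothesis HXinv : omega_invariant w X.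
Hypothesis HX0 : X !=set0.
Hypothesis Hp : prime_set w X.
Local Notation ws := (word_sum w).

Definition Yi (i : 'I_n) := [set x | X x /\ X (x - w i)].

Lemma Yi_closed i : closed (Yi i).
Proof.
apply: closedI; first exact: inv_closed HXinv.
exact: (@closed_transl _ X (- w i) (inv_closed HXinv)).
Qed.

Lemma Yi_fwd i : fwd w (Yi i).
Proof.
move=> j x [Xx Xxi]; split; first exact: (inv_fwd HXinv).
by rewrite addrAC; apply: (inv_fwd HXinv).
Qed.

Lemma Zi_inv i : omega_invariant w (Zc w (Yi i)).
Proof. exact: Zc_inv (@Yi_closed i) (@Yi_fwd i). Qed.

Lemma chainZ (P : pred 'I_n) x : X x ->
  (forall mu, X (x - ws mu) -> exists2 j, P j & X (x - ws mu - w j)) ->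
  exists2 j, P j & Zc w (Yi j) x.
Proof.
move=> Xx hx; apply: contrapT => hn.
have : forall j, exists k, P j -> ~ Bk w (Yi j) k x.
  move=> j; apply: contrapT => /forallNP hj; apply: hn; exists j.
    by have /not_implyP [] := hj 0%N.
  by move=> k; have /not_implyP [_ /contrapT] := hj k.
move=> /choice [f hf].
have Q : forall m, exists j rho, [/\ P j, size rho = m & X (x - ws (j :: rho))].
  elim=> [|m [j [rho [Pj srho Xr]]]].
    have [|j Pj Xj] := hx [::]; first by rewrite ws_nil subr0.
    by exists j, [::]; split => //; rewrite ws_cons_sub ws_nil subr0 in Xj *.
  have [j' Pj' Xj'] := hx _ Xr.
  by exists j', (j :: rho); split => //=; [rewrite srho | rewrite ws_cons_sub].
have [j [rho [Pj srho Xr]]] := Q (\max_i f i).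
apply: (hf j Pj); apply: (@Bk_mono _ _ _ _ _ (\max_i f i) _ (@Yi_fwd j)).
  exact: leq_bigmax.
exists rho; split => //; split; last by rewrite -ws_cons_sub.
have := inv_fwd HXinv j Xr; rewrite ws_cons_sub subrK; exact.
Qed.

Definition I' : {set 'I_n} := [set i | `[< forall x, X x -> X (x - w i) >]].

Lemma inI' i : i \in I' -> forall x, X x -> X (x - w i).
Proof. by rewrite inE => /asboolP. Qed.

Lemma notinI' i : i \notin I' -> exists2 x, X x & ~ X (x - w i).
Proof.
rewrite inE => /asboolP /existsNP [x /not_implyP [Xx nX]]; by exists x.
Qed.

Lemma Zi_notinI' j : j \notin I' -> ~ X `<=` Zc w (Yi j).
Proof.
move=> /notinI' [x Xx nX] h; apply: nX; by have [] := Zc_sub (h _ Xx).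
Qed.

Lemma I'_nonempty : I' != finset.set0.
Proof.
have [x0 Xx0] := HX0.
have cov : X `<=` Ucov set0 (fun j => Zc w (Yi j)) (enum 'I_n).
  move=> x Xx; right.
  have [|j _ Zj] := @chainZ predT x Xx; last by exists j => //; rewrite mem_enum.
  move=> mu Xmu; have [_ _ hb] := HXinv; have [j Xj] := hb _ Xmu; by exists j.
case: (prime_cover Hp (@inv_set0 _ _ w) (fun j _ => Zi_inv j) cov) => [/(_ _ Xx0) //|].
move=> [j _ h]; apply/set0Pn; exists j; rewrite inE; apply/asboolP => x Xx.
by have [] := Zc_sub (h _ Xx).
Qed.

Lemma X_Om x s : X x -> Omega w I' s -> X (x + s).
Proof.
move=> Xx Os; move: x Xx; pose S := [set s | forall x, X x -> X (x + s)].
suff : Omega w I' `<=` S by move=> /(_ _ Os).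
apply: Om_min; split.
- move=> t clt x Xx; apply: (inv_closed HXinv) => B nB.
  have nB' : nbhs t [set y | B (x + y)].
    have := @transl_nbhs G t x B; rewrite addrC => /(_ nB).
    by apply: filterS => y /=; rewrite addrC.
  have [u [Su Bu]] := clt _ nB'; by exists (x + u); split => //; apply: Su.
- by move=> a b Sa Sb x Xx; rewrite addrA; apply: Sb; apply: Sa.
- by move=> j x Xx; apply: (inv_fwd HXinv).
- by move=> i iI x Xx; apply: inI'.
Qed.

Definition B0 := [set x | X x /\ forall j, j \notin I' -> ~ X (x - w j)].

Lemma ancestor_B0 x : X x -> (forall j, j \notin I' -> ~ Zc w (Yi j) x) ->
  exists mu, B0 (x - ws mu).
Proof.
move=> Xx hZ; apply: contrapT => /forallNP hB.
have [|j jI Zj] := @chainZ (fun j => j \notin I') x Xx; last exact: hZ j jI Zj.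
move=> mu Xmu; have := hB mu; move=> /not_andP [//|/existsNP [j /not_implyP [jI /contrapT Xj]]].
by exists j.
Qed.

Lemma B0_Om z g : X z -> B0 g -> Omega w I' (z - g).
Proof.
move=> Xz [Xg hg]; apply: contrapT => nO.
have nb : nbhs (z - g) (~` Omega w I').
  by apply: open_nbhs_nbhs; split => //; rewrite openC; apply: Om_closed.
have [U [V [nU nV hUV]]] := sub_nbhs nb.
have nN : \forall y \near g, forall j, j \notin I' -> ~ X (y - w j).
  apply: filter_forall => j; case: (boolP (j \in I')) => jI.
    by apply: nearW => y /negP.
  have nj : nbhs (g - w j) (~` X).
    by apply: open_nbhs_nbhs; split; [rewrite openC; apply: inv_closed HXinv | apply: hg].
  by apply: filterS (transl_nbhs nj) => y /= h _.
have [b [mu [nu [Xb Ua [Vb Nb]]]]] := prime_II HXinv Hp Xz Xg nU (filterI nV nN).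
have anu : all (mem I') nu.
  apply/allP => j jn; apply/negPn/negP => jI; apply: (Nb j jI).
  rewrite (ws_rem w jn) addrA addrAC addrK; exact: (fwd_word (inv_fwd HXinv) (rem j nu) Xb).
apply: (hUV _ _ Ua Vb).
rewrite opprD addrACA subrr add0r.
by apply: Om_add; [apply: Om_word; apply: I'_nonempty | apply: Om_negword => //; apply: I'_nonempty].
Qed.

Lemma prime_IV : exists g (I : {set 'I_n}), I != finset.set0 /\ X = [set g + x | x in Omega w I].
Proof.
pose sJ := [seq j <- enum 'I_n | j \notin I'].
have iZ : forall j, j \in sJ -> omega_invariant w (Zc w (Yi j)) by move=> j _; exact: Zi_inv.
have sJP : forall j, (j \in sJ) = (j \notin I') by move=> j; rewrite mem_filter mem_enum andbT.
have [x [Xx hx]] : exists x, X x /\ forall j, j \notin I' -> ~ Zc w (Yi j) x.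
  apply: contrapT => /forallNP hn.
  have cov : X `<=` Ucov set0 (fun j => Zc w (Yi j)) sJ.
    move=> x Xx; right; have := hn x => /not_andP [//|/existsNP [j /not_implyP [jI /contrapT Zj]]].
    by exists j => //; rewrite sJP.
  case: (prime_cover Hp (@inv_set0 _ _ w) iZ cov) => [|[j]].
    by have [x0 Xx0] := HX0 => /(_ _ Xx0).
  by rewrite sJP => jI; apply: Zi_notinI'.
have [mu Bg] := ancestor_B0 Xx hx.
set g := x - ws mu in Bg.
have Xg : X g by case: Bg.
pose T := [set g + s | s in Omega w I'].
have TE : T = [set y | Omega w I' (y + - g)].
  apply/seteqP; split => y /=; first by move=> [s Os <-]; rewrite addrAC subrr add0r.
  by move=> Oy; exists (y - g) => //; rewrite addrC subrK.
have iT : omega_invariant w T.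
  rewrite TE; split.
  - exact: closed_transl (@Om_closed _ _ _ _).
  - by move=> i y Oy /=; rewrite addrAC; apply: Om_add => //; apply: Om_w.
  - have /set0Pn [i0 i0I] := I'_nonempty.
    by move=> y Oy; exists i0 => /=; rewrite addrAC; apply: Om_add => //; apply: Om_negw.
have cov : X `<=` Ucov T (fun j => Zc w (Yi j)) sJ.
  move=> y Xy; case: (EM (exists2 j, j \notin I' & Zc w (Yi j) y)) => [[j jI Zj]|hn].
    by right; exists j => //; rewrite sJP.
  left; have [nu Bz] : exists nu, B0 (y - ws nu).
    apply: ancestor_B0 => // j jI Zj; apply: hn; by exists j.
  have Xz : X (y - ws nu) by case: Bz.
  rewrite TE /=.
  have := Om_add (B0_Om Xz Bg) (Om_word nu I'_nonempty).
  by rewrite addrAC subrK.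
case: (prime_cover Hp iT iZ cov) => [XT|[j]]; last by rewrite sJP => jI /Zi_notinI'.
exists g, I'; split; first exact: I'_nonempty.
apply/seteqP; split => // y [s Os <-]; exact: X_Om.
Qed.

End PrimeIV.

Definition incr (phi : nat -> nat) := forall k, (phi k < phi k.+1)%N.

Lemma incr_mono phi : incr phi -> forall k l, (k <= l)%N -> (phi k <= phi l)%N.
Proof.
move=> hp k l /subnK <-; elim: (l - k)%N => [|d IH] //.
by rewrite addSn; apply: (leq_trans IH); apply: ltnW.
Qed.

Lemma incr_ge phi : incr phi -> forall k, (k <= phi k)%N.
Proof. by move=> hp; elim=> // k IH; apply: (leq_ltn_trans IH). Qed.

Lemma incr_comp phi psi : incr phi -> incr psi -> incr (phi \o psi).
Proof.
move=> hp hq k /=; have := incr_mono hp (hq k).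
by apply: leq_trans; apply: hp.
Qed.

Lemma dickson1 (a : nat -> nat) : exists phi, incr phi /\
  forall k l, (k <= l)%N -> (a (phi k) <= a (phi l))%N.
Proof.
have hmin : forall k, exists j, (k <= j)%N /\ forall j', (k <= j')%N -> (a j <= a j')%N.
  move=> k.
  have ex : exists v, (fun v => `[< exists j, (k <= j)%N /\ a j = v >]) v.
    by exists (a k); apply/asboolP; exists k.
  case: (ex_minnP ex) => v /asboolP [j [kj <-]] hv.
  exists j; split => // j' kj'; apply: hv; apply/asboolP; by exists j'.
have [g hg] := choice hmin.
pose s := fix s k := if k is k'.+1 then (g (s k')).+1 else 0%N.
exists (fun k => g (s k)).
have step : forall k, (g (s k) < g (s k.+1))%N /\ (a (g (s k)) <= a (g (s k.+1)))%N.
  move=> k; have [h1 _] := hg (s k.+1); split; first exact: h1.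
  have [h2 h3] := hg (s k); apply: h3; apply: leq_trans h1.
  by apply: (leq_trans h2).
split; first by move=> k; have [] := step k.
move=> k l /subnK <-; elim: (l - k)%N => [|d IH] //.
by rewrite addSn; apply: (leq_trans IH); have [] := step (d + k)%N.
Qed.

Lemma dickson (T : finType) (c : nat -> T -> nat) : exists phi, incr phi /\
  forall k l, (k <= l)%N -> forall t, (c (phi k) t <= c (phi l) t)%N.
Proof.
suff : forall s : seq T, exists phi, incr phi /\
  forall k l, (k <= l)%N -> forall t, t \in s -> (c (phi k) t <= c (phi l) t)%N.
  move=> /(_ (enum T)) [phi [hp hc]]; exists phi; split => // k l kl t.
  by apply: hc => //; rewrite mem_enum.
elim=> [|t s [phi [hp hc]]]; first by exists id; split.
have [psi [hq hm]] := dickson1 (fun k => c (phi k) t).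
exists (phi \o psi); split; first exact: incr_comp.
move=> k l kl u; rewrite inE => /orP [/eqP -> |us]; first exact: hm.
by apply: hc => //; apply: incr_mono.
Qed.

Section Seqs.
Variable (G : topologicalZmodType).

Lemma cvg_sub (u v : nat -> G) (a b : G) : u @ \oo --> a -> v @ \oo --> b ->
  (fun k => u k - v k) @ \oo --> a - b.
Proof.
move=> hu hv B nB; have [U [V [nU nV h]]] := sub_nbhs nB.
have h1 := hu _ nU; have h2 := hv _ nV.
have := @filterI _ _ eventually_filter _ _ h1 h2.
by apply: filterS => k /= [Uk Vk]; exact: h _ _ Uk Vk.
Qed.

Lemma cvg_subseq (u : nat -> G) (a : G) phi : incr phi -> u @ \oo --> a ->
  (u \o phi) @ \oo --> a.
Proof.
move=> hp hu B nB; have [N _ hN] := hu _ nB; exists N => // k /= Nk.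
apply: hN => /=; apply: leq_trans Nk _; exact: incr_ge.
Qed.

Lemma cvg_const_sub (u : nat -> G) (a : G) : u @ \oo --> a -> (fun k => a - u k) @ \oo --> 0.
Proof. by move=> hu; rewrite -(subrr a); apply: cvg_sub => //; apply: cvg_cst. Qed.

Hypothesis H2c : @second_countable G.

Lemma nbhs_base (p : G) : exists W : nat -> set G, [/\ (forall k, nbhs p (W k)),
  (forall k l, (k <= l)%N -> W l `<=` W k) &
  (forall U, nbhs p U -> exists k, W k `<=` U)].
Proof.
have [B cB [oB hB]] := H2c.
have [f finj] := countable_injP _ cB.
exists (fun k => [set y | forall b, B b -> b p -> (f b <= k)%N -> b y]); split.
- move=> k.
  have : \forall y \near p, forall i : 'I_k.+1, forall b, B b -> b p -> f b = i -> b y.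
    apply: filter_forall => i.
    case: (EM (exists b, [/\ B b, b p & f b = i])) => [[b [Bb bp fb]]|nb].
      have nbb : nbhs p b by apply: open_nbhs_nbhs; split => //; apply: oB.
      apply: filterS nbb => y yb b' Bb' b'p fb'.
      have -> : b' = b by apply: finj; rewrite ?inE // fb fb'.
      exact: yb.
    by apply: nearW => y b Bb bp fb; exfalso; apply: nb; exists b.
  apply: filterS => y hy b Bb bp fbk.
  by apply: (hy (Ordinal (fbk : (f b < k.+1)%N))).
- move=> k l kl y hy b Bb bp fbk; apply: hy => //; exact: leq_trans kl.
- move=> U nU; have [V [BV Vp] VU] := hB p U nU.
  exists (f V) => y hy; apply: VU; exact: hy.
Qed.

Lemma seq_closure (A : set G) x : closure A x ->
  exists u : nat -> G, (forall k, A (u k)) /\ u @ \oo --> x.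
Proof.
move=> cx; have [W [nW mW bW]] := nbhs_base x.
have : forall k, exists y, A y /\ W k y by move=> k; have [y []] := cx _ (nW k); exists y.
move=> /choice [u hu]; exists u; split; first by move=> k; case: (hu k).
move=> U nU; have [k0 Wk0] := bW _ nU; exists k0 => // k /= k0k.
by apply: Wk0; apply: (mW _ _ k0k); case: (hu k).
Qed.

End Seqs.

Lemma alg_id (V : zmodType) (g e f a b : V) :
  (g + (e - (a + b))) - (g + (f - (b + a))) = e - f.
Proof. by rewrite (addrC b a) (addrC g) addrKA opprB subrKA. Qed.

Lemma alg_aux (V : zmodType) (x m a b : V) : x - (m - a) - (a + b) = x - (m + b).
Proof. by rewrite [X in _ = _ + X]opprD addrA opprB addrA opprD addrA (addrAC (x + a)) addrK. Qed.
Lemma alg_id2 (V : zmodType) (g x0 x1 m a nn b : V) :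
  g + x0 - (m + b) - (g + x1 - (nn + a)) = x0 - (m - a) - (x1 - (nn - b)).
Proof.
by rewrite -(@alg_id V g (x0 - (m - a)) (x1 - (nn - b)) a b) alg_aux alg_aux !addrA.
Qed.

Section IVIII.
Variables (G : topologicalZmodType) (n : nat) (w : 'I_n -> G) (X : set G).
Hypothesis H2c : @second_countable G.
Local Notation ws := (word_sum w).

Lemma ws_cnt mu : ws mu = \sum_t w t *+ count_mem t mu.
Proof.
elim: mu => [|i mu IH]; first by rewrite ws_nil big1 // => t _.
rewrite ws_cons IH.
under [RHS]eq_bigr => t _ do rewrite /= mulrnDr.
rewrite big_split /=; congr (_ + _).
rewrite (bigD1 i) //= eqxx mulr1n big1 ?addr0 // => t ti.
by rewrite eq_sym (negbTE ti) mulr0n.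
Qed.

Variable (I : {set 'I_n}).
Hypothesis hI : I != finset.set0.
Local Notation Om := (Omega w I).

Lemma Om_sumn (d : 'I_n -> nat) : Om (\sum_t w t *+ d t).
Proof.
apply: (big_ind Om); [exact: Om0 | exact: Om_add | move=> t _].
elim: (d t) => [|m IH]; first by rewrite mulr0n; apply: Om0.
by rewrite mulrS; apply: Om_add => //; apply: Om_w.
Qed.

Lemma diff_Om mu mu' : (forall t, (count_mem t mu <= count_mem t mu')%N) ->
  Om (ws mu' - ws mu).
Proof.
move=> hc; rewrite !ws_cnt -sumrB.
under eq_bigr => t _ do rewrite -mulrnBr //.
exact: Om_sumn.
Qed.

Lemma IV_III (g : G) : X = [set g + x | x in Om] -> propIII w X.
Proof.
move=> XE g0 g1; rewrite XE => -[x0 Ox0 <-] [x1 Ox1 <-].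
have [s [Ss hs]] := seq_closure H2c (Om_clS Ox0).
have [t [St ht]] := seq_closure H2c (Om_clS Ox1).
have /choice [MA hMA] : forall k, exists p : seq 'I_n * seq 'I_n,
    all (mem I) p.2 /\ s k = ws p.1 - ws p.2.
  by move=> k; have [mu [nu [anu e]]] := Ss k; exists (mu, nu).
have /choice [NB hNB] : forall k, exists p : seq 'I_n * seq 'I_n,
    all (mem I) p.2 /\ t k = ws p.1 - ws p.2.
  by move=> k; have [mu [nu [anu e]]] := St k; exists (mu, nu).
have [phi [hp hc]] := dickson (fun k (u : 'I_n + 'I_n) =>
  match u with inl i => count_mem i (MA k).1 | inr i => count_mem i (NB k).1 end).
have key0 : forall k, Om (x0 - ws (MA (phi k)).1).
  move=> k; apply: (@closed_cvg _ _ \oo eventually_filter (fun k' => s (phi k') - ws (MA (phi k)).1) Om (@Om_closed _ _ w I)).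
    exists k => // k' /= kk'; have [a1 ->] := hMA (phi k').
    rewrite addrAC; apply: Om_add; last exact: Om_negword.
    by apply: diff_Om => u; have := hc _ _ kk' (inl u).
  by apply: cvg_sub; [apply: (cvg_subseq hp hs) | apply: cvg_cst].
have key1 : forall k, Om (x1 - ws (NB (phi k)).1).
  move=> k; apply: (@closed_cvg _ _ \oo eventually_filter (fun k' => t (phi k') - ws (NB (phi k)).1) Om (@Om_closed _ _ w I)).
    exists k => // k' /= kk'; have [a1 ->] := hNB (phi k').
    rewrite addrAC; apply: Om_add; last exact: Om_negword.
    by apply: diff_Om => u; have := hc _ _ kk' (inr u).
  by apply: cvg_sub; [apply: (cvg_subseq hp ht) | apply: cvg_cst].
exists (fun k => (MA (phi k)).1 ++ (NB (phi k)).2), (fun k => (NB (phi k)).1 ++ (MA (phi k)).2); split.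
- move=> k; exists (x0 - ws (MA (phi k)).1 - ws (NB (phi k)).2).
    by apply: Om_add => //; apply: Om_negword => //; case: (hNB (phi k)).
  by rewrite ws_cat opprD !addrA.
- move=> k; exists (x1 - ws (NB (phi k)).1 - ws (MA (phi k)).2).
    by apply: Om_add => //; apply: Om_negword => //; case: (hMA (phi k)).
  by rewrite ws_cat opprD !addrA.
have e0 := cvg_const_sub (cvg_subseq hp hs).
have e1 := cvg_const_sub (cvg_subseq hp ht).
have := cvg_sub e0 e1; rewrite subr0.
suff -> : (fun k => g + x0 - ws ((MA (phi k)).1 ++ (NB (phi k)).2) -
     (g + x1 - ws ((NB (phi k)).1 ++ (MA (phi k)).2))) =
   (fun k => x0 - (s \o phi) k - (x1 - (t \o phi) k)) by [].
apply: funext => k /=; rewrite (hMA (phi k)).2 (hNB (phi k)).2 !ws_cat.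
exact: alg_id2.
Qed.

End IVIII.

Unset Implicit Arguments.
Set Strict Implicit.

Theorem proposition4p11 (G : topologicalZmodType)
  (Hsep : hausdorff_space G) (Hlc : locally_compact [set: G])
  (H2c : @second_countable G)
  (n : nat) (Hn : (2 <= n)%N) (w : 'I_n -> G) (X : set G)
  (HX0 : X !=set0) (HXinv : omega_invariant w X) :
  [/\ (prime_set w X <->
        (forall g0 g1 (U0 U1 : set G), X g0 -> X g1 ->
           nbhs g0 U0 -> nbhs g1 U1 ->
           exists g mu nu, [/\ X g, U0 (g + word_sum w mu) & U1 (g + word_sum w nu)])),
      (prime_set w X <->
        (forall g0 g1, X g0 -> X g1 ->
           exists (mu nu : nat -> seq 'I_n),
             [/\ (forall k, X (g0 - word_sum w (mu k))),
                 (forall k, X (g1 - word_sum w (nu k))) &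
                 (fun k => (g0 - word_sum w (mu k)) - (g1 - word_sum w (nu k)))
                   @ \oo --> (0 : G)])) &
      (prime_set w X <->
        (exists (g : G) (I : {set 'I_n}), I != finset.set0 /\
           X = [set g + x | x in Omega w I]))].
Proof.
have p2 : prime_set w X -> propII w X := prime_II HXinv.
have i2 : propII w X -> prime_set w X := @II_prime _ _ w X.
have p4 : prime_set w X -> exists (g : G) (I : {set 'I_n}), I != finset.set0 /\
           X = [set g + x | x in Omega w I] := prime_IV HXinv HX0.
have h43 : (exists (g : G) (I : {set 'I_n}), I != finset.set0 /\
           X = [set g + x | x in Omega w I]) -> propIII w X.
  by move=> [g [I [hI XE]]]; exact: (@IV_III G n w X H2c I hI g XE).
have h32 : propIII w X -> propII w X := @III_II G n w X.
split; split.
- exact: p2.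
- exact: i2.
- by move=> Hp; apply: h43; apply: p4.
- by move=> h3; apply: i2; apply: h32.
- exact: p4.
- by move=> h4; apply: i2; apply: h32; apply: h43.
Qed.
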